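(* Let $n$ be a positive integer and let $Cl$ be a clique (complete graph) on $\sqrt{n}$ nodes, whose edges carry local port labels at each endpoint. Suppose each node of $Cl$ has a whiteboard of $O(\log n)$ bits of storage and two mobile agents, each with $O(\log n)$ bits of memory, operate in $Cl$. Then the two agents cannot construct the map of $Cl$.
   Context: Constructing the map of a graph means that the agents compute (store) a copy of the graph including all of its port labels. Agents can read and write the whiteboards of the nodes they visit; the only storage available is the agents' memory and the nodes' whiteboards. *)

(* Defs.v *)
From mathcomp Require Import all_boot.
Set Implicit Arguments. Unset Strict Implicit. Unset Printing Implicit Defensive.

(* A port labeling assigns to
   each node u a bijection from its local ports 'I_(k.-1) onto the other
   k-1 nodes: [pl u i] is the neighbour reached from u through port i. *)
Definition port_labeling (k : nat) := 'I_k -> 'I_k.-1 -> 'I_k.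

Definition valid_labeling k (pl : port_labeling k) : Prop :=
  forall u : 'I_k, injective (pl u) /\ (forall i, pl u i != u).

(* Isomorphism of port-labeled cliques: a renaming of nodes preserving
   all port labels.  A "copy of the graph including all port labels" is
   a port-labeled graph isomorphic to the original. *)
Definition pl_iso k (pl1 pl2 : port_labeling k) : Prop :=
  exists s : 'I_k -> 'I_k, bijective s /\
    forall u i, pl2 (s u) i = s (pl1 u i).

(* Global storage of the system: the memories of the two agents and the
   whiteboards of the k nodes, each a bit string. *)
Definition config (k : nat) := (('I_2 -> seq bool) * ('I_k -> seq bool))%type.

Definition fits k (B : nat) (C : config k) : Prop :=
  (forall a, size (C.1 a) <= B) /\ (forall v, size (C.2 v) <= B).

(* Storage bound c * log n bits (log taken as trunc_log 2 n + 1 >= 1). *)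
Definition bits (c n : nat) : nat := c * (trunc_log 2 n).+1.

(* An algorithm run by the two agents, on every port labeling of the clique,
   ends in a final storage configuration [F pl]. *)
Definition constructs_map k (B : nat) (F : port_labeling k -> config k) : Prop :=
  exists decode : config k -> port_labeling k,
    forall pl, valid_labeling pl ->
      fits B (F pl) /\ pl_iso pl (decode (F pl)).

(* Main.v *)
Require Import Defs.
From mathcomp Require Import all_boot all_fingroup zify.
From Stdlib Require Import FunctionalExtensionality.
Lemma fact_lb a n : a ^ n <= (a + n)`!.
Proof.
elim: n => [|n IH]; first by rewrite expn0 fact_gt0.
rewrite addnS factS expnS; apply: leq_mul => //; lia.
Qed.

Lemma expn_mono e m n : m <= n -> m ^ e <= n ^ e.
Proof. by case: e => // e H; rewrite leq_exp2r. Qed.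

Lemma key d k : 4 * d + 8 <= k -> k ^ d.+1 < (k.-1)`!.
Proof.
move=> Hk.
set a := k %/ 2.
have Ha2 : k <= a ^ 2 by rewrite /a; nia.
have Hn : (k.-1 = a + (k.-1 - a)) by rewrite /a; lia.
rewrite Hn; apply: (leq_trans _ (fact_lb _ _)).
apply: (@leq_ltn_trans ((a ^ 2) ^ d.+1)); first exact: expn_mono.
rewrite -expnM ltn_exp2l; rewrite /a; lia.
Qed.

Lemma arith c : exists N, forall k, N <= k ->
  let B := bits c (k * k) in
  (B.+1 * 2 ^ B) ^ 2 * (B.+1 * 2 ^ B) ^ k * k ^ k < ((k.-1)`!) ^ k.
Proof.
exists (4 * (12 * c) + 8) => k Hk; set B := bits c (k * k) => /=.
have k2 : 2 <= k by lia.
set t := trunc_log 2 (k * k).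
have Ht : 2 ^ t <= k * k by apply: trunc_logP => //; nia.
have HB : B = c * t.+1 by [].
set E := 2 ^ (2 * B).
have H1 : B.+1 * 2 ^ B <= E.
  rewrite /E mul2n -addnn expnD leq_mul2r ltn_expl //.
  by rewrite orbT.
apply: (@leq_ltn_trans (E ^ k * E ^ k * k ^ k)).
  apply: leq_mul => //; apply: leq_mul.
    apply: (@leq_trans (E ^ 2)); first exact: expn_mono. apply: leq_pexp2l; rewrite ?expn_gt0 //; lia.
  exact: expn_mono.
rewrite -!expnMn ltn_exp2r; last by lia.
have HE : 2 ^ (4 * B) <= k ^ (12 * c).
  have -> : 4 * B = t.+1 * (4 * c) by rewrite HB; lia.
  rewrite expnM.
  have H3 : 2 ^ t.+1 <= k ^ 3 by rewrite expnS; nia.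
  apply: (@leq_trans ((k ^ 3) ^ (4 * c))); first exact: expn_mono.
  rewrite -expnM leq_exp2l //; lia.
have -> : (2 * 2) ^ (2 * B) = 2 ^ (4 * B) by rewrite expnMn -expnD; congr (_ ^ _); lia.
apply: (@leq_ltn_trans (k ^ (12 * c).+1)); last exact: key.
by rewrite expnS mulnC leq_mul2l HE orbT.
Qed.
Section S.
Variable B : nat.
Definition enc (s : seq bool) : 'I_B.+1 * {ffun 'I_B -> bool} :=
  (inord (size s), [ffun i : 'I_B => nth false s i]).

Lemma enc_inj s1 s2 : size s1 <= B -> size s2 <= B -> enc s1 = enc s2 -> s1 = s2.
Proof.
move=> h1 h2 [] /(congr1 (@nat_of_ord _)); rewrite !inordK ?ltnS // => Hs /ffunP Hf.
apply: (eq_from_nth (x0 := false) Hs) => i Hi.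
have HiB : i < B by apply: leq_trans Hi h1.
by have := Hf (Ordinal HiB); rewrite !ffunE.
Qed.
End S.

Definition fam k (g : {ffun 'I_k -> {perm 'I_k.-1}}) : port_labeling k :=
  fun u i => lift u (g u i).

Arguments fam {k}.
Lemma fam_valid k (g : {ffun 'I_k -> {perm 'I_k.-1}}) : valid_labeling (fam g).
Proof.
move=> u; split; first by move=> i j /lift_inj /perm_inj.
by move=> i; rewrite eq_sym neq_lift.
Qed.

Theorem lemma1 :
  forall c : nat, exists N : nat, forall k : nat, N <= k ->
    ~ exists F : port_labeling k -> config k, constructs_map (bits c (k * k)) F.
Proof.
move=> c; have [N HN] := arith c; exists N => k Hk [F [dec Hdec]].
have Har := HN k Hk; move: Har => /=.
set B := bits c (k * k) => Har.
pose P (g : {ffun 'I_k -> {perm 'I_k.-1}}) (s : {ffun 'I_k -> 'I_k}) :=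
  injectiveb s && [forall u, forall i, dec (F (fam g)) (s u) i == s (fam g u i)].
pose h g := (([ffun a => enc B ((F (fam g)).1 a)], [ffun v => enc B ((F (fam g)).2 v)]),
             odflt [ffun x => x] [pick s | P g s]).
have Hex g : exists s, P g s.
  have [_ [s [/bij_inj sinj Hs]]] := Hdec _ (fam_valid _ g).
  exists [ffun x => s x]; apply/andP; split.
    by apply/injectiveP => x y; rewrite !ffunE => /sinj.
  by apply/forallP => u; apply/forallP => i; rewrite !ffunE Hs.
have Hpick g : exists s, [pick s | P g s] = Some s /\ P g s.
  case: pickP => [s Ps|H0]; first by exists s.
  by have [s Ps] := Hex g; rewrite H0 in Ps.
have hinj : injective h.
  move=> g1 g2 [E1 E2 E3].
  have [fit1 _] := Hdec _ (fam_valid _ g1).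
  have [fit2 _] := Hdec _ (fam_valid _ g2).
  have HC : F (fam g1) = F (fam g2).
    move: (F (fam g1)) (F (fam g2)) fit1 fit2 E1 E2 => [m1 w1] [m2 w2] [f1 f1'] [f2 f2'] /= E1 E2.
    f_equal; apply: functional_extensionality => x.
      by move/ffunP: E1 => /(_ x); rewrite !ffunE; apply: enc_inj.
    by move/ffunP: E2 => /(_ x); rewrite !ffunE; apply: enc_inj.
  have [s1 [Hp1 P1]] := Hpick g1; have [s2 [Hp2 P2]] := Hpick g2.
  rewrite Hp1 Hp2 /= in E3; subst s2.
  move: P1 P2 => /andP [/injectiveP sinj /forallP P1] /andP [_ /forallP P2].
  apply/ffunP => u; apply/permP => i.
  move: (P1 u) (P2 u) => /forallP /(_ i) /eqP Q1 /forallP /(_ i) /eqP Q2.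
  rewrite HC Q2 in Q1; move/sinj: Q1 => /lift_inj.
  done.
have := leq_card h hinj.
rewrite !card_prod !card_ffun !card_prod !card_ffun card_Sn !card_ord card_bool.
by rewrite leqNgt Har.
Qed.
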